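(* Let $q\in\mathbb{C}$, $|q|<1$, $\mathbf{s}=(s_1,\dots,s_d)\in\mathbb{N}^d$, $w=|\mathbf{s}|$. Define the power series $F_{\mathrm{I}}(t)=\mathbf{R}^{s_1-1}\mathbf{P}[\mathbf{y}\,\mathbf{R}^{s_2-1}\mathbf{P}[\mathbf{y}\cdots\mathbf{R}^{s_d-1}\mathbf{P}[\mathbf{y}]\cdots]](t)$, $F_{\mathrm{II}}(t)=\mathbf{R}^{s_1}[\mathbf{y}\,\mathbf{R}^{s_2}[\mathbf{y}\cdots\mathbf{R}^{s_d}[\mathbf{y}]\cdots]](t)$, $F_{\mathrm{III}}(t)=\mathbf{P}^{s_1-1}\mathbf{R}[\mathbf{y}\,\mathbf{P}^{s_2}[\mathbf{y}\cdots\mathbf{P}^{s_d}[\mathbf{y}]\cdots]](t)$, $F_{\mathrm{IV}}(t)=\mathbf{R}^{s_1-1}\mathbf{P}[\mathbf{y}\,\mathbf{R}^{s_2}[\mathbf{y}\cdots\mathbf{R}^{s_d}[\mathbf{y}]\cdots]](t)$. Then $\mathfrak{z}_q^{\mathfrak{t}}[\mathbf{s}]=F_{\mathfrak{t}}(1)$ and $\zeta_q^{\mathfrak{t}}[\mathbf{s}]=(1-q)^wF_{\mathfrak{t}}(1)$ for $\mathfrak{t}=\mathrm{II},\mathrm{III}$, and also for $\mathfrak{t}=\mathrm{I},\mathrm{IV}$ when $s_1\ge2$. Moreover, the analogous statements hold for the regularized values of types $\widetilde{\mathrm{I}}$ and $\widetilde{\mathrm{IV}}$: in $F_{\mathrm{I}}$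 one may replace any of the operator blocks $\mathbf{R}^{s_j-1}\mathbf{P}$ by a single $\mathbf{R}$, and in $F_{\mathrm{IV}}$ one may replace the block $\mathbf{R}^{s_1-1}\mathbf{P}$ by a single $\mathbf{R}$; the value at $t=1$ then equals $\mathfrak{z}_q^{\mathbf{t}}[\mathbf{s}']$ where at each replaced position $j$ the entry becomes $(t_j,s'_j)=(1,1)$ and the other entries $(t_j,s'_j)$ are as for type I (resp. IV).
   Context: $\mathfrak{z}_q^{\mathbf{t}}[\mathbf{s}]=\sum_{k_1>\dots>k_d>0}\prod_j\frac{q^{k_jt_j}}{(1-q^{k_j})^{s_j}}$, $\zeta_q^{\mathbf{t}}[\mathbf{s}]=(1-q)^{|\mathbf{s}|}\mathfrak{z}_q^{\mathbf{t}}[\mathbf{s}]$. Types: $\mathfrak{z}_q^{\mathrm{I}}[\mathbf{s}]=\mathfrak{z}_q^{(s_1-1,\dots,s_d-1)}[\mathbf{s}]$, $\mathfrak{z}_q^{\mathrm{II}}[\mathbf{s}]=\mathfrak{z}_q^{(s_1,\dots,s_d)}[\mathbf{s}]$, $\mathfrak{z}_q^{\mathrm{III}}[\mathbf{s}]=\mathfrak{z}_q^{(1,0,\dots,0)}[\mathbf{s}]$, $\mathfrak{z}_q^{\mathrm{IV}}[\mathbf{s}]=\mathfrak{z}_q^{(s_1-1,s_2,\dots,s_d)}[\mathbf{s}]$, similarly for $\zeta_q$. Operators on power series in $t$ without constant term: $\mathbf{P}[f](t)=\sum_{k\ge0}f(q^kt)$, $\mathbf{R}[f](t)=\sum_{k\ge1}f(q^kt)$,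 powers are compositions; $\mathbf{y}$ is multiplication by $\mathbf{y}(t)=t/(1-t)$ (innermost: the function itself). *)

(* Defs.v *)
From Stdlib Require Import Reals List.
From Coquelicot Require Import Coquelicot.
Open Scope C_scope.

(** Formal power series in t, represented by their coefficient sequences
    (a n = coefficient of t^n).  All series below have no constant term,
    except the auxiliary unit series [one] used to start the nesting. *)
Definition ps := nat -> C.

Fixpoint sumC (f : nat -> C) (n : nat) : C :=
  match n with O => 0 | S m => sumC f m + f m end.

Definition qpow (q : C) (n : nat) : C := pow_n q n.

(** P[f](t) = sum_{k>=0} f(q^k t):  t^n |-> t^n / (1 - q^n)  (n >= 1) *)
Definition Pop (q : C) (a : ps) : ps :=
  fun n => match n with O => 0 | _ => a n / (1 - qpow q n) end.

(** R[f](t) = sum_{k>=1} f(q^k t):  t^n |-> q^n t^n / (1 - q^n)  (n >= 1) *)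
Definition Rop (q : C) (a : ps) : ps :=
  fun n => match n with O => 0 | _ => a n * qpow q n / (1 - qpow q n) end.

Definition opow (k : nat) (T : ps -> ps) : ps -> ps := Nat.iter k T.

Definition one : ps := fun n => match n with O => 1 | _ => 0 end.

(** multiplication by y(t) = t/(1-t) = sum_{j>=1} t^j :
    (y a)_n = sum_{m<n} a_m ; in particular y * one = y. *)
Definition ymul (a : ps) : ps := fun n => sumC a n.

Fixpoint build (bs : list (ps -> ps)) : ps :=
  match bs with
  | nil => one
  | b :: rest => b (ymul (build rest))
  end.

Definition value_at_1 (a : ps) (z : C) : Prop := is_series a z.

(** truncated multiple q-sum
    sum_{N > k1 > ... > kd > 0} prod_j q^{k_j t_j} / (1 - q^{k_j})^{s_j},
    for the list of pairs [(t1,s1);...;(td,sd)]. *)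
Definition qterm (q : C) (t s k : nat) : C :=
  qpow q (k * t) / pow_n (1 - qpow q k) s.

Fixpoint qtrunc (q : C) (ts : list (nat * nat)) (N : nat) : C :=
  match ts with
  | nil => 1
  | (t, s) :: rest =>
      sumC (fun k => match k with
                     | O => 0
                     | _ => qterm q t s k * qtrunc q rest k
                     end) N
  end.

Definition frakz_is (q : C) (ts : list (nat * nat)) (z : C) : Prop :=
  filterlim (qtrunc q ts) eventually (locally z).

Definition weight (ts : list (nat * nat)) : nat := fold_right (fun p w => (snd p + w)%nat) O ts.

Definition zeta_is (q : C) (ts : list (nat * nat)) (z : C) : Prop :=
  filterlim (fun N => pow_n (1 - q) (weight ts) * qtrunc q ts N) eventually (locally z).

Definition type_claim (q : C) (ts : list (nat * nat)) (F : ps) : Prop :=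
  exists z : C, value_at_1 F z /\ frakz_is q ts z /\
                zeta_is q ts (pow_n (1 - q) (weight ts) * z).

Definition blockI (q : C) (s : nat) : ps -> ps := fun a => opow (s - 1) (Rop q) (Pop q a).
Definition blockII (q : C) (s : nat) : ps -> ps := opow s (Rop q).
Definition blockIII1 (q : C) (s : nat) : ps -> ps := fun a => opow (s - 1) (Pop q) (Rop q a).
Definition blockIII (q : C) (s : nat) : ps -> ps := opow s (Pop q).

Definition tI (s : list nat) := map (fun x => (x - 1, x)%nat) s.
Definition tII (s : list nat) := map (fun x => (x, x)) s.

Definition tIreg (s : list nat) (rep : list bool) : list (nat * nat) :=
  map (fun p : nat * bool => if snd p then (1, 1)%nat else (fst p - 1, fst p)%nat)
      (combine s rep).
Definition FIreg (q : C) (s : list nat) (rep : list bool) : ps :=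
  build (map (fun p : nat * bool => if snd p then Rop q else blockI q (fst p))
             (combine s rep)).

(* Main.v *)
Require Import Defs.
From Stdlib Require Import Reals List Lia Lra.
From Coquelicot Require Import Coquelicot.
Open Scope C_scope.

Lemma pow_n_S (z : C) k : pow_n z (S k) = z * pow_n z k.
Proof. reflexivity. Qed.
Lemma pow_n_add (z : C) a b : pow_n z (a + b) = pow_n z a * pow_n z b.
Proof. exact (pow_n_plus z a b). Qed.
Lemma pow_n_0 (z : C) : (pow_n z 0 : C) = (1 : C).
Proof. reflexivity. Qed.

Lemma Cmod_pow_n (z : C) k : Cmod (pow_n z k) = (Cmod z ^ k)%R.
Proof. induction k. simpl. apply Cmod_1. rewrite pow_n_S, Cmod_mult, IHk. simpl. ring. Qed.

Lemma pow_n_neq0 (z : C) k : z <> 0 -> (pow_n z k : C) <> (0:C).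
Proof. intros H. apply Cmod_gt_0. rewrite Cmod_pow_n. apply pow_lt. now apply Cmod_gt_0. Qed.

Section S.
Variable q : C.
Hypothesis hq : (Cmod q < 1)%R.

Lemma Cmod_qpow n : Cmod (qpow q n) = (Cmod q ^ n)%R.
Proof. apply Cmod_pow_n. Qed.

Lemma r0_le_pow n : (1 <= n)%nat -> (Cmod q ^ n <= Cmod q)%R.
Proof.
  intros Hn. destruct n as [|n]. lia. simpl.
  assert (0 <= Cmod q)%R by apply Cmod_ge_0.
  assert (Cmod q ^ n <= 1)%R.
  { rewrite <- (pow1 n). apply pow_incr. lra. }
  nra.
Qed.

Lemma one_minus_ne n : (1 <= n)%nat -> 1 - qpow q n <> 0.
Proof.
  intros Hn E.
  assert (qpow q n = 1).
  { replace (qpow q n) with (1 - (1 - qpow q n)) by ring. rewrite E. ring. }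
  pose proof (r0_le_pow n Hn). rewrite <- Cmod_qpow in H0. rewrite H, Cmod_1 in H0. lra.
Qed.

Lemma qterm_R t s n : (1 <= n)%nat ->
  qterm q (S t) (S s) n = qterm q t s n * qpow q n / (1 - qpow q n).
Proof.
  intros Hn. unfold qterm. rewrite Nat.mul_succ_r. unfold qpow.
  rewrite pow_n_add, pow_n_S.
  pose proof (one_minus_ne n Hn). unfold qpow in H.
  pose proof (pow_n_neq0 _ s H).
  field. split; assumption.
Qed.

Lemma qterm_P t s n : (1 <= n)%nat ->
  qterm q t (S s) n = qterm q t s n / (1 - qpow q n).
Proof.
  intros Hn. unfold qterm. rewrite pow_n_S.
  pose proof (one_minus_ne n Hn). unfold qpow in *.
  pose proof (pow_n_neq0 _ s H).
  field. split; assumption.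
Qed.

Lemma qterm_00 n : qterm q 0 0 n = 1.
Proof. unfold qterm, qpow. rewrite Nat.mul_0_r, !pow_n_0. field. Qed.

Definition isblk (B : ps -> ps) t s :=
  forall a : ps, B a O = 0 /\ forall n, (1 <= n)%nat -> B a n = qterm q t s n * a n.

Lemma isblk_ext B B' t s t' s' : isblk B t s -> (forall a n, B' a n = B a n) ->
  t = t' -> s = s' -> isblk B' t' s'.
Proof. intros H E -> ->. intros a. rewrite E. destruct (H a) as [H1 H2]. split; auto.
  intros n Hn. rewrite E. auto. Qed.

Lemma isblk_R : isblk (Rop q) 1 1.
Proof. intros a. split. reflexivity. intros [|n] Hn. lia.
  change (Rop q a (S n)) with (a (S n) * qpow q (S n) / (1 - qpow q (S n))).
  rewrite qterm_R by lia. rewrite qterm_00. unfold Cdiv. ring. Qed.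

Lemma isblk_P : isblk (Pop q) 0 1.
Proof. intros a. split. reflexivity. intros [|n] Hn. lia.
  change (Pop q a (S n)) with (a (S n) / (1 - qpow q (S n))).
  rewrite qterm_P by lia. rewrite qterm_00. unfold Cdiv. ring. Qed.

Lemma isblk_iterR B t s k : isblk B t s -> isblk (fun a => opow k (Rop q) (B a)) (t + k) (s + k).
Proof.
  intros H. induction k.
  - eapply isblk_ext. exact H. intros; reflexivity. lia. lia.
  - intros a. destruct (IHk a) as [H1 H2]. split. reflexivity.
    intros [|n] Hn. lia.
    change (opow (S k) (Rop q) (B a) (S n)) with
      (opow k (Rop q) (B a) (S n) * qpow q (S n) / (1 - qpow q (S n))).
    rewrite H2 by lia. rewrite !Nat.add_succ_r, qterm_R by lia. unfold Cdiv. ring.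
Qed.

Lemma isblk_iterP B t s k : isblk B t s -> isblk (fun a => opow k (Pop q) (B a)) t (s + k).
Proof.
  intros H. induction k.
  - eapply isblk_ext. exact H. intros; reflexivity. lia. lia.
  - intros a. destruct (IHk a) as [H1 H2]. split. reflexivity.
    intros [|n] Hn. lia.
    change (opow (S k) (Pop q) (B a) (S n)) with
      (opow k (Pop q) (B a) (S n) / (1 - qpow q (S n))).
    rewrite H2 by lia. rewrite !Nat.add_succ_r, qterm_P by lia. unfold Cdiv. ring.
Qed.

Lemma isblk_I s : (1 <= s)%nat -> isblk (blockI q s) (s - 1) s.
Proof. intros Hs. eapply isblk_ext. apply (isblk_iterR _ _ _ (s-1) isblk_P).
  intros; reflexivity. lia. lia. Qed.

Lemma isblk_II s : (1 <= s)%nat -> isblk (blockII q s) s s.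
Proof. intros Hs. eapply isblk_ext. apply (isblk_iterR _ _ _ (s-1) isblk_R).
  intros a n. unfold blockII. destruct s. lia. unfold opow. rewrite Nat.iter_succ_r.
  simpl. rewrite Nat.sub_0_r. reflexivity. lia. lia. Qed.

Lemma isblk_III1 s : (1 <= s)%nat -> isblk (blockIII1 q s) 1 s.
Proof. intros Hs. eapply isblk_ext. apply (isblk_iterP _ _ _ (s-1) isblk_R).
  intros; reflexivity. lia. lia. Qed.

Lemma isblk_III s : (1 <= s)%nat -> isblk (blockIII q s) 0 s.
Proof. intros Hs. eapply isblk_ext. apply (isblk_iterP _ _ _ (s-1) isblk_P).
  intros a n. unfold blockIII. destruct s. lia. unfold opow. rewrite Nat.iter_succ_r.
  simpl. rewrite Nat.sub_0_r. reflexivity. lia. lia. Qed.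


Definition coef (ts : list (nat * nat)) : ps :=
  match ts with
  | nil => Defs.one
  | (t, s) :: r => fun k => match k with O => 0 | _ => qterm q t s k * qtrunc q r k end
  end.

Lemma sumC_ext f g n : (forall k, f k = g k) -> sumC f n = sumC g n.
Proof. intros H. induction n; simpl; congruence. Qed.

Lemma sumC_one n : sumC Defs.one (S n) = 1.
Proof. induction n. simpl. ring. change (sumC Defs.one (S n) + Defs.one (S n) = 1). rewrite IHn. simpl. ring. Qed.

Lemma sumC_coef ts n : sumC (coef ts) (S n) = qtrunc q ts (S n).
Proof. destruct ts as [|[t s] r]. apply sumC_one. reflexivity. Qed.

Lemma build_coef bl :
  List.Forall (fun p : (ps -> ps) * (nat * nat) => isblk (fst p) (fst (snd p)) (snd (snd p))) bl ->
  forall n, build (map fst bl) n = coef (map snd bl) n.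
Proof.
  induction bl as [|[B [t s]] r IH]; intros HF n. reflexivity.
  inversion HF; subst. simpl in H1. specialize (IH H2).
  simpl. destruct (H1 (ymul (build (map fst r)))) as [H0 HS].
  destruct n as [|n]. exact H0.
  rewrite HS by lia. f_equal. unfold ymul.
  rewrite (sumC_ext _ (coef (map snd r))) by exact IH. apply sumC_coef.
Qed.

Definition r0 := Cmod q.
Definition A := (/ (1 - r0))%R.
Definition c := (2 / (1 + r0))%R.

Lemma r0_ge0 : (0 <= r0)%R.
Proof. apply Cmod_ge_0. Qed.

Lemma c_gt1 : (1 < c)%R.
Proof. unfold c. pose proof r0_ge0. unfold r0 in *. apply (Rmult_lt_reg_r (1 + Cmod q)). lra.
  unfold Rdiv. rewrite Rmult_assoc, Rinv_l by lra. lra. Qed.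

Lemma rc_lt1 : (r0 * c < 1)%R.
Proof. unfold c. pose proof r0_ge0. unfold r0 in *.
  replace (Cmod q * (2 / (1 + Cmod q)))%R with (2 * Cmod q / (1 + Cmod q))%R by (field; lra).
  apply (Rmult_lt_reg_r (1 + Cmod q)). lra.
  unfold Rdiv. rewrite Rmult_assoc, Rinv_l by lra. lra. Qed.

Lemma A_ge1 : (1 <= A)%R.
Proof. unfold A. pose proof r0_ge0. unfold r0 in *.
  rewrite <- Rinv_1. apply Rinv_le_contravar; lra. Qed.

Lemma Cmod_one_minus n : (1 <= n)%nat -> (1 - r0 <= Cmod (1 - qpow q n))%R.
Proof.
  intros Hn. pose proof (Cmod_triangle (1 - qpow q n) (qpow q n)).
  replace (1 - qpow q n + qpow q n) with (RtoC 1) in H by ring.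
  rewrite Cmod_1, Cmod_qpow in H. pose proof (r0_le_pow n Hn). unfold r0. lra.
Qed.

Lemma qterm_bound t s n : (1 <= n)%nat ->
  (Cmod (qterm q t s n) <= Cmod q ^ (n * t) * A ^ s)%R.
Proof.
  intros Hn. unfold qterm. unfold Cdiv. rewrite Cmod_mult.
  pose proof (one_minus_ne n Hn). pose proof (pow_n_neq0 _ s H).
  rewrite Cmod_inv by exact H0. rewrite Cmod_qpow, Cmod_pow_n.
  apply Rmult_le_compat_l. apply pow_le, Cmod_ge_0.
  unfold A. rewrite pow_inv. apply Rinv_le_contravar.
  apply pow_lt. pose proof r0_ge0. unfold r0 in *. lra.
  apply pow_incr. split. pose proof r0_ge0. unfold r0 in *. lra. now apply Cmod_one_minus.
Qed.

Lemma pow_r0_le1 k : (Cmod q ^ k <= 1)%R.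
Proof. rewrite <- (pow1 k). apply pow_incr. pose proof r0_ge0. unfold r0 in *. lra. Qed.

Lemma sum_geom_bound (f : nat -> C) M : (0 <= M)%R ->
  (forall k, Cmod (f k) <= M * (c - 1) * c ^ k)%R ->
  forall n, (Cmod (sumC f n) <= M * c ^ n)%R.
Proof.
  intros HM Hf n. induction n.
  - simpl. rewrite Cmod_0. lra.
  - simpl sumC. eapply Rle_trans. apply Cmod_triangle.
    replace (M * c ^ S n)%R with (M * c ^ n + M * (c - 1) * c ^ n)%R by (simpl; ring).
    specialize (Hf n). lra.
Qed.

Lemma inner_bound r : exists K, (0 <= K)%R /\ forall n, (Cmod (qtrunc q r n) <= K * c ^ n)%R.
Proof.
  induction r as [|[t s] r IH].
  - exists 1%R. split. lra. intros n. simpl. rewrite Cmod_1.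
    pose proof (pow_R1_Rle c n). pose proof c_gt1. lra.
  - destruct IH as [K [HK HB]]. pose proof c_gt1. pose proof A_ge1.
    assert (0 <= A ^ s)%R by (apply pow_le; lra).
    exists (A ^ s * K / (c - 1))%R. split.
    { apply Rmult_le_pos. now apply Rmult_le_pos. apply Rlt_le, Rinv_0_lt_compat. lra. }
    intros n. simpl. apply sum_geom_bound.
    { apply Rmult_le_pos. now apply Rmult_le_pos. apply Rlt_le, Rinv_0_lt_compat. lra. }
    intros [|k]. rewrite Cmod_0. apply Rmult_le_pos. apply Rmult_le_pos.
    apply Rmult_le_pos. now apply Rmult_le_pos. apply Rlt_le, Rinv_0_lt_compat. lra. lra.
    apply pow_le; lra.
    replace (A ^ s * K / (c - 1) * (c - 1) * c ^ S k)%R with ((1 * A ^ s) * (K * c ^ S k))%R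
      by (field; lra).
    rewrite Cmod_mult. apply Rmult_le_compat. apply Cmod_ge_0. apply Cmod_ge_0.
    eapply Rle_trans. apply qterm_bound; lia. apply Rmult_le_compat_r. lra. apply pow_r0_le1.
    apply HB.
Qed.

Lemma coef_ex t s r : (1 <= t)%nat -> ex_series (coef ((t, s) :: r)).
Proof.
  intros Ht. destruct (inner_bound r) as [K [HK HB]].
  pose proof A_ge1. pose proof c_gt1. pose proof r0_ge0. pose proof rc_lt1.
  assert (0 <= A ^ s)%R by (apply pow_le; lra).
  apply (@ex_series_le C_AbsRing C_CompleteNormedModule _ (fun n => (A ^ s * K) * (r0 * c) ^ n)%R).
  - intros [|n]. change (Cmod 0 <= A ^ s * K * (r0 * c) ^ 0)%R.
    rewrite Cmod_0. simpl. nra.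
    change (Cmod (qterm q t s (S n) * qtrunc q r (S n)) <= A ^ s * K * (r0 * c) ^ S n)%R.
    rewrite Cmod_mult, Rpow_mult_distr.
    replace (A ^ s * K * (r0 ^ S n * c ^ S n))%R with ((r0 ^ S n * A ^ s) * (K * c ^ S n))%R by ring.
    apply Rmult_le_compat. apply Cmod_ge_0. apply Cmod_ge_0.
    eapply Rle_trans. apply qterm_bound; lia. apply Rmult_le_compat_r. lra.
    unfold r0. replace (S n * t)%nat with (S n + (S n * (t - 1)))%nat by nia.
    rewrite pow_add. pose proof (pow_r0_le1 (S n * (t-1))). pose proof (pow_le (Cmod q) (S n) r0_ge0).
    nra. apply HB.
  - apply (ex_series_ext (fun n => scal (A ^ s * K)%R ((r0 * c) ^ n)%R)). reflexivity.
    apply (@ex_series_scal_l R_AbsRing R_NormedModule). apply ex_series_geom. rewrite Rabs_pos_eq. exact H2.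
    apply Rmult_le_pos; lra.
Qed.


Lemma sum_n_sumC (a : nat -> C) N : sum_n a N = sumC a (S N).
Proof. induction N. rewrite sum_O. simpl. ring. rewrite sum_Sn, IHN. reflexivity. Qed.

Lemma shift_lim (f : nat -> C) z :
  filterlim (fun N => f (S N)) eventually (locally z) -> filterlim f eventually (locally z).
Proof.
  unfold filterlim, filter_le, filtermap. intros H P HP. destruct (H P HP) as [M HM].
  exists (S M). intros n Hn. destruct n. lia. apply HM. lia.
Qed.

Definition blkP (p : (ps -> ps) * (nat * nat)) := isblk (fst p) (fst (snd p)) (snd (snd p)).

Lemma main_claim B t s r :
  List.Forall blkP ((B, (t, s)) :: r) -> (1 <= t)%nat ->
  type_claim q (map snd ((B, (t, s)) :: r)) (build (map fst ((B, (t, s)) :: r))).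
Proof.
  intros HF Ht. set (ts := map snd ((B, (t, s)) :: r)).
  destruct (coef_ex t s (map snd r) Ht) as [z Hz].
  assert (Hz' : is_series (coef ts) z) by exact Hz.
  exists z. split; [|split].
  - unfold value_at_1. apply (is_series_ext (coef ts)). intros n. symmetry. now apply build_coef.
    exact Hz'.
  - unfold frakz_is. apply shift_lim. unfold is_series in Hz'.
    eapply filterlim_ext. 2: exact Hz'. intros N.
    rewrite sum_n_sumC. apply sumC_coef.
  - unfold zeta_is. apply shift_lim.
    assert (HL : filterlim (fun N => qtrunc q ts (S N)) eventually (locally z)).
    { unfold is_series in Hz'. eapply filterlim_ext. 2: exact Hz'. intros N.
      rewrite sum_n_sumC. apply sumC_coef. }
    exact (filterlim_comp _ _ _ (fun N => qtrunc q ts (S N))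
             (fun x : C_NormedModule => scal (pow_n (1 - q) (weight ts) : C) x)
             eventually (locally z) _ HL (filterlim_scal_r _ _)).
Qed.

Lemma Forall_map_blk (f : nat -> (ps -> ps) * (nat * nat)) ss :
  List.Forall (fun x => (1 <= x)%nat) ss -> (forall x, (1 <= x)%nat -> blkP (f x)) ->
  List.Forall blkP (map f ss).
Proof. intros H Hf. apply Forall_map. eapply Forall_impl. 2: exact H. exact Hf. Qed.

End S.

Theorem corollary6p4 (q : C) (s1 : nat) (ss : list nat) :
  (Cmod q < 1)%R ->
  (1 <= s1)%nat -> List.Forall (fun x => (1 <= x)%nat) ss ->
  (* type II *)
  type_claim q (tII (s1 :: ss)) (build (map (blockII q) (s1 :: ss)))
  (* type III *)
  /\ type_claim q ((1, s1)%nat :: map (fun x => (0, x)%nat) ss)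
                  (build (blockIII1 q s1 :: map (blockIII q) ss))
  (* types I and IV, when s1 >= 2 *)
  /\ ((2 <= s1)%nat ->
        type_claim q (tI (s1 :: ss)) (build (map (blockI q) (s1 :: ss)))
     /\ type_claim q ((s1 - 1, s1)%nat :: tII ss)
                     (build (blockI q s1 :: map (blockII q) ss)))
  (* regularized type I~ : any set of positions replaced by a single R *)
  /\ (forall (b1 : bool) (rs : list bool),
        length rs = length ss -> (b1 = false -> (2 <= s1)%nat) ->
        exists z : C, value_at_1 (FIreg q (s1 :: ss) (b1 :: rs)) z
                      /\ frakz_is q (tIreg (s1 :: ss) (b1 :: rs)) z)
  (* regularized type IV~ : first block replaced by a single R *)
  /\ (exists z : C, value_at_1 (build (Rop q :: map (blockII q) ss)) z
                    /\ frakz_is q ((1, 1)%nat :: tII ss) z)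
.
Proof.
  intros hq Hs1 Hss.
  pose (fII := fun x : nat => (blockII q x, (x, x))).
  pose (fIII := fun x : nat => (blockIII q x, (0%nat, x))).
  pose (fI := fun x : nat => (blockI q x, ((x - 1)%nat, x))).
  assert (HII : List.Forall (blkP q) (map fII ss)).
  { apply Forall_map_blk. exact Hss. intros x Hx. apply isblk_II; assumption. }
  assert (HIII : List.Forall (blkP q) (map fIII ss)).
  { apply Forall_map_blk. exact Hss. intros x Hx. apply isblk_III; assumption. }
  assert (HI : List.Forall (blkP q) (map fI ss)).
  { apply Forall_map_blk. exact Hss. intros x Hx. apply isblk_I; assumption. }
  assert (IVt : type_claim q ((1, 1)%nat :: tII ss) (build (Rop q :: map (blockII q) ss))).
  { pose proof (main_claim q hq (Rop q) 1 1 (map fII ss)) as M.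
    cbn [map] in M. rewrite !map_map in M. apply M; [|lia].
    constructor. apply isblk_R; assumption. exact HII. }
  split; [|split; [|split; [|split]]].
  - pose proof (main_claim q hq (blockII q s1) s1 s1 (map fII ss)) as M.
    cbn [map] in M. rewrite !map_map in M. apply M; [|lia].
    constructor. apply isblk_II; assumption. exact HII.
  - pose proof (main_claim q hq (blockIII1 q s1) 1 s1 (map fIII ss)) as M.
    cbn [map] in M. rewrite !map_map in M. apply M; [|lia].
    constructor. apply isblk_III1; assumption. exact HIII.
  - intros H2. split.
    + pose proof (main_claim q hq (blockI q s1) (s1 - 1) s1 (map fI ss)) as M.
      cbn [map] in M. rewrite !map_map in M. apply M; [|lia].
      constructor. apply isblk_I; assumption. exact HI.
    + pose proof (main_claim q hq (blockI q s1) (s1 - 1) s1 (map fII ss)) as M.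
      cbn [map] in M. rewrite !map_map in M. apply M; [|lia].
      constructor. apply isblk_I; assumption. exact HII.
  - intros b1 rs _ Hb1.
    pose (g := fun p : nat * bool => if snd p then (Rop q, (1%nat, 1%nat))
                                     else (blockI q (fst p), ((fst p - 1)%nat, fst p))).
    assert (HF : List.Forall (blkP q) (map g (combine ss rs))).
    { apply Forall_forall. intros x Hx. apply in_map_iff in Hx. destruct Hx as [[y b] [<- Hy]].
      apply in_combine_l in Hy. rewrite Forall_forall in Hss. specialize (Hss y Hy).
      destruct b; simpl. apply isblk_R; assumption. apply isblk_I; assumption. }
    assert (E1 : tIreg (s1 :: ss) (b1 :: rs) = map snd (map g (combine (s1 :: ss) (b1 :: rs)))).
    { unfold tIreg. rewrite map_map. apply map_ext. intros [x b]. destruct b; reflexivity. }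
    assert (E2 : FIreg q (s1 :: ss) (b1 :: rs) = build (map fst (map g (combine (s1 :: ss) (b1 :: rs))))).
    { unfold FIreg. rewrite map_map. f_equal. apply map_ext. intros [x b]. destruct b; reflexivity. }
    rewrite E1, E2. simpl combine. simpl map at 1 3.
    destruct b1.
    + destruct (main_claim q hq (Rop q) 1 1 (map g (combine ss rs))) as [z [Z1 [Z2 _]]].
      constructor. apply isblk_R; assumption. exact HF. lia.
      exists z. split; assumption.
    + destruct (main_claim q hq (blockI q s1) (s1 - 1) s1 (map g (combine ss rs))) as [z [Z1 [Z2 _]]].
      constructor. apply isblk_I; assumption. exact HF. specialize (Hb1 eq_refl). lia.
      exists z. split; assumption.
  - destruct IVt as [z [Z1 [Z2 _]]]. exists z. split; assumption.
Qed.
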